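(* Let $C_{1/3}$ be the middle-third Cantor set and $C(1/3)=C_{1/3}\times C_{1/3}$. For every $\mathbf{t}\in C(1/3)$, the pinned distance set $\Delta_{\mathbf{t}}(C(1/3))=\{\|\mathbf{c}-\mathbf{t}\|_2:\mathbf{c}\in C(1/3)\}$ has non-empty interior.
   Context: $C_{1/3}=\{\tfrac23\sum_{k\ge1}a_k3^{-(k-1)}:a_k\in\{0,1\}\}$; $\|\cdot\|_2$ is the Euclidean norm on $\mathbb{R}^2$. *)

(* Defs.v *)
From Stdlib Require Import Reals.
Open Scope R_scope.

(* Middle-third Cantor set:
   C_{1/3} = { (2/3) * sum_{k>=1} a_k 3^{-(k-1)} : a_k in {0,1} }.
   Indexing from 0: x = (2/3) * sum_{n>=0} a_n (1/3)^n. *)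
Definition cantor_third (x : R) : Prop :=
  exists a : nat -> bool,
    infinite_sum (fun n => (if a n then 1 else 0) * (/ 3) ^ n) ((3 / 2) * x).

Definition cantor_square (p : R * R) : Prop :=
  cantor_third (fst p) /\ cantor_third (snd p).

Definition dist2 (c t : R * R) : R :=
  sqrt ((fst c - fst t) ^ 2 + (snd c - snd t) ^ 2).

Definition pinned_distance_set (E : R * R -> Prop) (t : R * R) (r : R) : Prop :=
  exists c, E c /\ r = dist2 c t.

Definition nonempty_interior (S : R -> Prop) : Prop :=
  exists a b : R, a < b /\ forall r, a < r < b -> S r.

(* Main.v *)
Require Import Defs.
From Stdlib Require Import Reals Lra Lia Psatz.
Open Scope R_scope.
Definition term (a : nat -> bool) (n : nat) : R := (if a n then 1 else 0) * (/ 3) ^ n.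
Fixpoint P (a : nat -> bool) (n : nat) : R :=
  match n with O => 0 | S k => P a k + term a k end.

Lemma P_sum a n : P a (S n) = sum_f_R0 (term a) n.
Proof. induction n as [|n IH]; simpl in *. ring. rewrite <- IH. ring. Qed.

Lemma pow3_pos n : 0 < (/3) ^ n.
Proof. apply pow_lt; lra. Qed.

Lemma pow3_le1 n : (/3) ^ n <= 1.
Proof. induction n; simpl. lra. pose proof (pow3_pos n). lra. Qed.

Lemma term_bounds a n : 0 <= term a n <= (/3) ^ n.
Proof. unfold term. pose proof (pow3_pos n). destruct (a n); lra. Qed.

Lemma P_tail a n k : P a n <= P a (n + k) <= P a n + (3/2) * ((/3)^n - (/3)^(n+k)).
Proof.
  induction k as [|k IH].
  - rewrite Nat.add_0_r. lra.
  - rewrite Nat.add_succ_r. simpl. pose proof (term_bounds a (n+k)).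
    pose proof (pow3_pos (n+k)). lra.
Qed.

Lemma lim_bounds f S N lo hi : infinite_sum f S ->
  (forall m, (m >= N)%nat -> lo <= sum_f_R0 f m <= hi) -> lo <= S <= hi.
Proof.
  intros HS Hb. split; apply Rnot_lt_le; intro H.
  - destruct (HS (lo - S)) as [N' HN']. lra.
    specialize (HN' (Nat.max N N') (Nat.le_max_r _ _)).
    specialize (Hb (Nat.max N N') (Nat.le_max_l _ _)).
    unfold Rdist in HN'. pose proof (Rle_abs (sum_f_R0 f (Nat.max N N') - S)). lra.
  - destruct (HS (S - hi)) as [N' HN']. lra.
    specialize (HN' (Nat.max N N') (Nat.le_max_r _ _)).
    specialize (Hb (Nat.max N N') (Nat.le_max_l _ _)).
    unfold Rdist in HN'. rewrite Rabs_minus_sym in HN'.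
    pose proof (Rle_abs (S - sum_f_R0 f (Nat.max N N'))). lra.
Qed.

Lemma cantor_bounds a Sm : infinite_sum (term a) Sm ->
  forall n, P a n <= Sm <= P a n + (3/2) * (/3)^n.
Proof.
  intros HS n. apply (lim_bounds (term a) Sm n); auto.
  intros m Hm. rewrite <- P_sum.
  replace (S m) with (n + (S m - n))%nat by lia.
  pose proof (P_tail a n (S m - n)). pose proof (pow3_pos (n + (S m - n))). lra.
Qed.

Lemma cantor_exists a : exists S, infinite_sum (term a) S.
Proof.
  assert (Hg : Un_growing (sum_f_R0 (term a))).
  { intro n. simpl. pose proof (term_bounds a (S n)). lra. }
  assert (Hu : has_ub (sum_f_R0 (term a))).
  { exists (3/2). intros x [n ->]. rewrite <- P_sum.
    pose proof (P_tail a 0 (S n)) as HT. pose proof (pow3_pos (S n)) as HP. simpl in HT, HP |- *. lra. }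
  destruct (growing_cv _ Hg Hu) as [l Hl]. exists l. exact Hl.
Qed.

Lemma zero_small d C : (forall n, Rabs d <= C * (/3)^n) -> d = 0.
Proof.
  intro H. destruct (Req_dec d 0) as [|Hd]; auto. exfalso.
  assert (Hpos : 0 < Rabs d) by (apply Rabs_pos_lt; auto).
  assert (HC : 0 < C). { specialize (H 0%nat). simpl in H. lra. }
  destruct (pow_lt_1_zero (/3)) with (y := Rabs d / C) as [N HN].
  { rewrite Rabs_right; lra. } { apply Rdiv_lt_0_compat; lra. }
  specialize (HN N (le_n _)). rewrite Rabs_right in HN by (left; apply pow3_pos).
  specialize (H N). apply (Rmult_lt_compat_l C) in HN; auto.
  replace (C * (Rabs d / C)) with (Rabs d) in HN by (field; lra). lra.
Qed.
Definition F (t1 t2 x y : R) : R := (x - t1)^2 + (y - t2)^2.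

Definition choose t1 t2 s x y l : bool * bool :=
  if Rle_dec s (F t1 t2 (x + l/3) (y + l/3)) then (false, false)
  else if Rle_dec s (F t1 t2 (x + l/3) (y + l)) then (false, true)
  else if Rle_dec s (F t1 t2 (x + l) (y + l/3)) then (true, false)
  else (true, true).

Definition shift (b : bool) (l : R) : R := if b then 2 * l / 3 else 0.

Lemma step t1 t2 s x y l : 0 < l ->
  2 * (y - t2) + l <= 2 * (x - t1) -> 2 * (x - t1) + l <= 6 * (y - t2) ->
  F t1 t2 x y <= s <= F t1 t2 (x + l) (y + l) ->
  let b := choose t1 t2 s x y l in
  let x' := x + shift (fst b) l in let y' := y + shift (snd b) l in
  F t1 t2 x' y' <= s <= F t1 t2 (x' + l/3) (y' + l/3) /\
  x <= x' /\ x' + l/3 <= x + l /\ y <= y' /\ y' + l/3 <= y + l.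
Proof.
  intros Hl H1 H2 Hs.
  assert (c1 : F t1 t2 x (y + 2*l/3) <= F t1 t2 (x + l/3) (y + l/3)).
  { unfold F. nra. }
  assert (c2 : F t1 t2 (x + 2*l/3) y <= F t1 t2 (x + l/3) (y + l)).
  { unfold F. nra. }
  assert (c3 : F t1 t2 (x + 2*l/3) (y + 2*l/3) <= F t1 t2 (x + l) (y + l/3)).
  { unfold F. nra. }
  unfold choose.
  destruct (Rle_dec s (F t1 t2 (x + l/3) (y + l/3))) as [h1|h1];
  [|destruct (Rle_dec s (F t1 t2 (x + l/3) (y + l))) as [h2|h2];
  [|destruct (Rle_dec s (F t1 t2 (x + l) (y + l/3))) as [h3|h3]]];
  simpl; unfold shift;
  repeat match goal with |- context [?a + 0] => replace (a + 0) with a by ring end.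
  - split; [lra|]. lra.
  - replace (y + 2 * l / 3 + l / 3) with (y + l) by field. lra.
  - replace (x + 2 * l / 3 + l / 3) with (x + l) by field. lra.
  - replace (x + 2 * l / 3 + l / 3) with (x + l) by field.
    replace (y + 2 * l / 3 + l / 3) with (y + l) by field. lra.
Qed.

Fixpoint st t1 t2 s x0 y0 L (j : nat) : R * R :=
  match j with
  | O => (x0, y0)
  | S k => let xy := st t1 t2 s x0 y0 L k in
           let b := choose t1 t2 s (fst xy) (snd xy) (L * (/3)^k) in
           (fst xy + shift (fst b) (L * (/3)^k), snd xy + shift (snd b) (L * (/3)^k))
  end.

Lemma inv t1 t2 s x0 y0 L : 0 < L ->
  2 * (y0 + L - t2) + L <= 2 * (x0 - t1) -> 2 * (x0 + L - t1) + L <= 6 * (y0 - t2) ->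
  F t1 t2 x0 y0 <= s <= F t1 t2 (x0 + L) (y0 + L) ->
  forall j, let x := fst (st t1 t2 s x0 y0 L j) in let y := snd (st t1 t2 s x0 y0 L j) in
  let l := L * (/3)^j in
  x0 <= x /\ x + l <= x0 + L /\ y0 <= y /\ y + l <= y0 + L /\
  F t1 t2 x y <= s <= F t1 t2 (x + l) (y + l).
Proof.
  intros HL H1 H2 Hs j. induction j as [|j IH]; simpl.
  - rewrite Rmult_1_r. lra.
  - simpl in IH. set (x := fst (st t1 t2 s x0 y0 L j)) in *.
    set (y := snd (st t1 t2 s x0 y0 L j)) in *.
    set (l := L * (/3)^j) in *.
    assert (Hl : 0 < l) by (apply Rmult_lt_0_compat; [lra | apply pow3_pos]).
    assert (HlL : l <= L) by (unfold l; pose proof (pow3_le1 j); nra).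
    replace (L * (/3 * (/3)^j)) with (l / 3) by (unfold l; field).
    destruct IH as (a1 & a2 & a3 & a4 & a5).
    destruct (step t1 t2 s x y l Hl) as (b1 & b2 & b3 & b4 & b5); try lra; auto.
Qed.

Definition seqx (pre : nat -> bool) (m : nat) (d : nat -> bool) (n : nat) : bool :=
  if Nat.ltb n m then pre n else d (n - m)%nat.

Lemma P_ext a b n : (forall k, (k < n)%nat -> a k = b k) -> P a n = P b n.
Proof.
  induction n as [|n IH]; intro H; simpl. reflexivity.
  rewrite IH by (intros; apply H; lia). unfold term. rewrite H by lia. reflexivity.
Qed.

Lemma digits_gen pre m d (z : nat -> R) : z O = (2/3) * P pre m ->
  (forall j, z (S j) = z j + shift (d j) ((/3)^m * (/3)^j)) ->
  forall j, (2/3) * P (seqx pre m d) (m + j) = z j.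
Proof.
  intros H0 HS j. induction j as [|j IH].
  - rewrite Nat.add_0_r, H0. f_equal. apply P_ext. intros k Hk.
    unfold seqx. apply Nat.ltb_lt in Hk. rewrite Hk. reflexivity.
  - rewrite Nat.add_succ_r, HS, <- IH. simpl. unfold term, seqx.
    replace (Nat.ltb (m + j) m) with false by (symmetry; apply Nat.ltb_ge; lia).
    replace (m + j - m)%nat with j by lia. rewrite pow_add. unfold shift.
    destruct (d j); field.
Qed.

Definition cantor_pt (a : nat -> bool) (X : R) : Prop :=
  infinite_sum (term a) ((3/2) * X).

Lemma core t1 t2 pre1 pre2 m s :
  let x0 := (2/3) * P pre1 m in let y0 := (2/3) * P pre2 m in let L := (/3)^m in
  0 < x0 - t1 -> 0 < y0 - t2 ->
  2 * (y0 + L - t2) + L <= 2 * (x0 - t1) -> 2 * (x0 + L - t1) + L <= 6 * (y0 - t2) ->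
  F t1 t2 x0 y0 <= s <= F t1 t2 (x0 + L) (y0 + L) ->
  exists X Y a1 a2, cantor_pt a1 X /\ cantor_pt a2 Y /\ F t1 t2 X Y = s.
Proof.
  intros x0 y0 L Hp Hq H1 H2 Hs.
  assert (HL : 0 < L) by apply pow3_pos.
  pose proof (inv t1 t2 s x0 y0 L HL H1 H2 Hs) as Hinv.
  set (z1 := fun j => fst (st t1 t2 s x0 y0 L j)).
  set (z2 := fun j => snd (st t1 t2 s x0 y0 L j)).
  set (d1 := fun j => fst (choose t1 t2 s (z1 j) (z2 j) (L * (/3)^j))).
  set (d2 := fun j => snd (choose t1 t2 s (z1 j) (z2 j) (L * (/3)^j))).
  set (a1 := seqx pre1 m d1). set (a2 := seqx pre2 m d2).
  assert (E1 : forall j, (2/3) * P a1 (m + j) = z1 j).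
  { apply digits_gen; reflexivity. }
  assert (E2 : forall j, (2/3) * P a2 (m + j) = z2 j).
  { apply digits_gen; reflexivity. }
  destruct (cantor_exists a1) as [S1 HS1]. destruct (cantor_exists a2) as [S2 HS2].
  exists ((2/3) * S1), ((2/3) * S2), a1, a2.
  split; [unfold cantor_pt; replace (3/2 * (2/3 * S1)) with S1 by field; auto|].
  split; [unfold cantor_pt; replace (3/2 * (2/3 * S2)) with S2 by field; auto|].
  set (K := 2 * (x0 + L - t1) + 2 * (y0 + L - t2) + 2 * L).
  apply Rminus_diag_uniq. apply (zero_small _ (K * L)). intro j.
  pose proof (cantor_bounds a1 S1 HS1 (m + j)) as B1.
  pose proof (cantor_bounds a2 S2 HS2 (m + j)) as B2.
  rewrite pow_add in B1, B2. fold L in B1, B2.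
  specialize (E1 j). specialize (E2 j).
  specialize (Hinv j). simpl in Hinv. fold (z1 j) (z2 j) in Hinv.
  set (l := L * (/3)^j) in *.
  assert (Hl : 0 < l) by (apply Rmult_lt_0_compat; [lra | apply pow3_pos]).
  assert (HlL : l <= L) by (unfold l; pose proof (pow3_le1 j); nra).
  destruct Hinv as (i1 & i2 & i3 & i4 & i5 & i6).
  assert (X1 : z1 j <= 2/3 * S1 <= z1 j + l) by lra.
  assert (X2 : z2 j <= 2/3 * S2 <= z2 j + l) by lra.
  unfold F in *.
  assert (M1 : (z1 j - t1)^2 + (z2 j - t2)^2 <= (2/3*S1 - t1)^2 + (2/3*S2 - t2)^2) by nra.
  assert (M2 : (2/3*S1 - t1)^2 + (2/3*S2 - t2)^2 <= (z1 j + l - t1)^2 + (z2 j + l - t2)^2) by nra.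
  assert (W : (z1 j + l - t1)^2 + (z2 j + l - t2)^2 - ((z1 j - t1)^2 + (z2 j - t2)^2) <= K * l).
  { unfold K. nra. }
  replace (K * L * (/3)^j) with (K * l) by (unfold l; ring).
  apply Rabs_le. lra.
Qed.

Lemma cantor_iff x : cantor_third x <-> exists a, cantor_pt a x.
Proof. reflexivity. Qed.

Lemma cantor_range x : cantor_third x -> 0 <= x /\ (x <= 1/3 \/ 2/3 <= x) /\ x <= 1.
Proof.
  intros [a Ha]. pose proof (cantor_bounds a _ Ha 1) as B. simpl in B. unfold term in B.
  destruct (a 0%nat); lra.
Qed.

Lemma P_compl a n : P a n + P (fun k => negb (a k)) n = (3/2) * (1 - (/3)^n).
Proof.
  induction n as [|n IH]; simpl. lra.
  unfold term. destruct (a n); simpl; lra.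
Qed.

Lemma cantor_refl x : cantor_third x -> cantor_third (1 - x).
Proof.
  intros [a Ha]. set (b := fun k => negb (a k)).
  destruct (cantor_exists b) as [Sb Hb]. exists b.
  replace (3/2 * (1 - x)) with Sb; auto.
  apply Rminus_diag_uniq. apply (zero_small _ 3). intro n.
  pose proof (cantor_bounds a _ Ha n). pose proof (cantor_bounds b _ Hb n).
  pose proof (P_compl a n). fold b in H1. pose proof (pow3_pos n).
  apply Rabs_le. lra.
Qed.

Definition NI (t : R * R) := nonempty_interior (pinned_distance_set cantor_square t).

Lemma transfer (t t' : R * R) (g : R * R -> R * R) :
  (forall c, cantor_square c -> cantor_square (g c) /\ dist2 (g c) t = dist2 c t') ->
  NI t' -> NI t.
Proof.
  intros Hg [a [b [Hab H]]]. exists a, b. split; auto. intros r Hr.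
  destruct (H r Hr) as [c [Hc ->]]. destruct (Hg c Hc) as [Hc' Hd].
  exists (g c). split; auto.
Qed.

Lemma P_true3 : P (fun _ => true) 3 = 13/9.
Proof. simpl. unfold term. simpl. field. Qed.

Lemma P_100 : P (fun n => Nat.eqb n 0) 3 = 1.
Proof. simpl. unfold term. simpl. field. Qed.

Lemma finish t1 t2 x0 y0 L : 0 < x0 - t1 -> 0 < y0 - t2 -> 0 < L ->
  (forall s, F t1 t2 x0 y0 <= s <= F t1 t2 (x0 + L) (y0 + L) ->
     exists X Y, cantor_third X /\ cantor_third Y /\ F t1 t2 X Y = s) ->
  NI (t1, t2).
Proof.
  intros Hp Hq HL H.
  set (lo := F t1 t2 x0 y0). set (hi := F t1 t2 (x0 + L) (y0 + L)).
  assert (Hlo : 0 <= lo) by (unfold lo, F; nra).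
  assert (Hlh : lo < hi) by (unfold lo, hi, F; nra).
  exists (sqrt lo), (sqrt hi). split. apply sqrt_lt_1; lra.
  intros r [r1 r2].
  pose proof (sqrt_pos lo).
  assert (E1 : sqrt lo * sqrt lo = lo) by (apply sqrt_sqrt; lra).
  assert (E2 : sqrt hi * sqrt hi = hi) by (apply sqrt_sqrt; lra).
  destruct (H (r^2)) as [X [Y [HX [HY HF]]]].
  { fold lo hi. split; nra. }
  exists (X, Y). split. split; auto.
  unfold dist2. cbn [fst snd]. unfold F in HF. rewrite HF. rewrite sqrt_pow2; lra.
Qed.

Lemma main_red t1 t2 : 0 <= t1 <= 1/3 -> 0 <= t2 <= 1/3 -> t1 <= t2 -> NI (t1, t2).
Proof.
  intros Ht1 Ht2 Hle.
  destruct (Rle_lt_dec (1/18) (t2 - t1)) as [HA|HB].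
  - apply (finish t1 t2 ((2/3) * P (fun _ => true) 3) ((2/3) * P (fun _ => true) 3) ((/3)^3));
      rewrite ?P_true3; try (simpl; lra).
    intros s Hs. pose proof (core t1 t2 (fun _ => true) (fun _ => true) 3 s) as Hc.
    cbv zeta in Hc. rewrite ?P_true3 in Hc, Hs.
    destruct Hc as (X & Y & a1 & a2 & h1 & h2 & h3); rewrite ?P_true3, ?P_100; try exact Hs; try (simpl; lra).
    exists X, Y. split; [exists a1|split; [exists a2|]]; auto.
  - apply (finish t1 t2 ((2/3) * P (fun _ => true) 3) ((2/3) * P (fun n => Nat.eqb n 0) 3) ((/3)^3));
      rewrite ?P_true3, ?P_100; try (simpl; lra).
    intros s Hs. pose proof (core t1 t2 (fun _ => true) (fun n => Nat.eqb n 0) 3 s) as Hc.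
    cbv zeta in Hc. rewrite ?P_true3, ?P_100 in Hc, Hs.
    destruct Hc as (X & Y & a1 & a2 & h1 & h2 & h3); rewrite ?P_true3, ?P_100; try exact Hs; try (simpl; lra).
    exists X, Y. split; [exists a1|split; [exists a2|]]; auto.
Qed.

Lemma red1 t1 t2 : cantor_third t1 -> cantor_third t2 -> t1 <= 1/3 -> t2 <= 1/3 -> NI (t1, t2).
Proof.
  intros C1 C2 h1 h2. pose proof (cantor_range _ C1). pose proof (cantor_range _ C2).
  destruct (Rle_lt_dec t1 t2).
  - apply main_red; lra.
  - apply (transfer _ (t2, t1) (fun c => (snd c, fst c))).
    + intros [c1 c2] [h3 h4]. split. split; auto. unfold dist2; simpl. f_equal. ring.
    + apply main_red; lra.
Qed.

Lemma red2 t1 t2 : cantor_third t1 -> cantor_third t2 -> t2 <= 1/3 -> NI (t1, t2).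
Proof.
  intros C1 C2 h2. pose proof (cantor_range _ C1) as R1.
  destruct (Rle_lt_dec t1 (1/3)).
  - apply red1; auto.
  - apply (transfer _ (1 - t1, t2) (fun c => (1 - fst c, snd c))).
    + intros [c1 c2] [h3 h4]. split. split; simpl; auto. apply cantor_refl; auto.
      unfold dist2; simpl. f_equal. ring.
    + apply red1; auto. apply cantor_refl; auto. lra.
Qed.

Theorem mainTheorem6 :
  forall t : R * R, cantor_square t ->
    nonempty_interior (pinned_distance_set cantor_square t).
Proof.
  intros [t1 t2] [C1 C2]. simpl in C1, C2. fold (NI (t1, t2)).
  pose proof (cantor_range _ C2) as R2.
  destruct (Rle_lt_dec t2 (1/3)).
  - apply red2; auto.
  - apply (transfer _ (t1, 1 - t2) (fun c => (fst c, 1 - snd c))).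
    + intros [c1 c2] [h3 h4]. split. split; simpl; auto. apply cantor_refl; auto.
      unfold dist2; simpl. f_equal. ring.
    + apply red2; auto. apply cantor_refl; auto. lra.
Qed.
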